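(* Let $f:\mathbb{R}^n\times\mathbb{R}\to\mathbb{R}$ be continuous and satisfy Assumption 1 on $R\times I$, where $R=\prod_{k=1}^n[\xi_k,\eta_k]$ ($\xi_k<\eta_k$) and $I$ is a compact interval, and suppose that the (unique) function $g:R\to I$ with $f(x,g(x))=0$ on $R$ is a polynomial in $x=(x_1,\dots,x_n)$. Let $a\in R$, and choose integers $N_k$ with $N_k$ larger than the largest exponent of $x_k$ occurring in $g$ ($k=1,\dots,n$); set $N=(N_1,\dots,N_n)$. Then $$g(x)=\sum_{0\le\beta\le N-1}c_\beta (x-a)^\beta,\qquad c_\beta=\prod_{k=1}^n(\beta_k+1)\sum_{1\le\alpha\le N}\ \prod_{k=1}^n\big(V_{N_k}^{-1}\big)_{\beta_k+1,\,\alpha_k}\, d_\alpha ,$$ where the sums run over multi-indices. (Equivalently, $(c_\beta)_\beta$ is the Hadamard product of $W$ with the tensor obtained from $(d_\alpha)_\alpha$ by applying $V_{N_k}^{-1}$ in the $k$-th index for every $k$, $W$ being the $N_1\times\cdots\times N_n$ tensor with entries $\gamma_1\cdots\gamma_n$.) Moreover these coefficients do not depend on the choice of $N$ as long as each $N_k$ exceeds the largest exponent of $x_k$ in $g$ (additional coefficients are zero).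
   Context: Multi-index notation: for $\alpha,\beta\in\mathbb{Z}^n$, $\alpha\le\beta$ means $\alpha_k\le\beta_k$ for all $k$, $(x-a)^\beta=\prod_k(x_k-a_k)^{\beta_k}$, and $N-1=(N_1-1,\dots,N_n-1)$. $\operatorname{sign}_y f(x,y)=1$ if $f(x,y)\ge0$ and $-1$ otherwise; $\Theta_y f(x,y)=1$ if $f(x,y)\ge0$ and $0$ otherwise. Assumption 1 on $R\times I$: for every $x\in R$, $y\mapsto\operatorname{sign}_y f(x,y)$ has exactly one jump discontinuity on $I$. $n_y(f)\in\{1,-1\}$ is $1$ if $y\mapsto\operatorname{sign}_y f(x,y)$ is increasing on $I$ and $-1$ if decreasing (constant in $x\in R$). Partition data: $\Delta_k=(\eta_k-\xi_k)/N_k$; for $1\le\alpha\le N$, the grid block $R_\alpha=\prod_{k=1}^n[\xi_k+(\alpha_k-1)\Delta_k,\ \xi_k+\alpha_k\Delta_k]$; $V_{N_k}$ is the $N_k\times N_k$ matrix with entry in row $\alpha_k$, column $j$ equal to $(\xi_k+\alpha_k\Delta_k-a_k)^j-(\xi_k+(\alpha_k-1)\Delta_k-a_k)^j$ (invertible); and $$d_\alpha=\frac{1+n_y(f)}{2}|R_\alpha|\max I+\frac{1-n_y(f)}{2}|R_\alpha|\min I-n_y(f)\iint_{R_\alpha\times I}\Theta_y f(x,y)\,dx\,dy .$$ *)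

(* Defs.v *)
From HB Require Import structures.
From mathcomp Require Import all_boot all_order all_algebra.
From mathcomp Require Import all_classical all_reals all_analysis.
Set Implicit Arguments. Unset Strict Implicit. Unset Printing Implicit Defensive.
Import Order.TTheory GRing.Theory Num.Theory.
Import numFieldNormedType.Exports.
Local Open Scope classical_set_scope.
Local Open Scope ring_scope.

Section Defs.
Variables (R : realType) (n : nat).

Definition inbox (xi eta : 'I_n -> R) (x : 'rV[R]_n) : Prop :=
  forall k, xi k <= x ord0 k <= eta k.

Definition Iset (c d : R) : set R := [set y | c <= y <= d].

Definition sgnf (f : 'rV[R]_n -> R -> R) (x : 'rV[R]_n) (y : R) : R :=
  if 0 <= f x y then 1 else -1.
Definition Thetaf (f : 'rV[R]_n -> R -> R) (x : 'rV[R]_n) (y : R) : R :=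
  if 0 <= f x y then 1 else 0.

Definition cont_within_at (A : set R) (h : R -> R) (y0 : R) : Prop :=
  h @ within A (nbhs y0) --> h y0.

(* Assumption 1 on R x I: for every x in the box, y |-> sign_y f(x,y) has exactly
   one (jump) discontinuity on I (discontinuity of the restriction to I). *)
Definition assumption1 (f : 'rV[R]_n -> R -> R) (xi eta : 'I_n -> R) (c d : R) : Prop :=
  forall x, inbox xi eta x ->
    exists y0, [/\ Iset c d y0, ~ cont_within_at (Iset c d) (sgnf f x) y0 &
      forall y, Iset c d y -> ~ cont_within_at (Iset c d) (sgnf f x) y -> y = y0].

Definition ny_spec (f : 'rV[R]_n -> R -> R) (xi eta : 'I_n -> R) (c d : R) (ny : R) : Prop :=
  (ny = 1 /\ forall x, inbox xi eta x -> forall y1 y2, Iset c d y1 -> Iset c d y2 ->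
      y1 <= y2 -> sgnf f x y1 <= sgnf f x y2)
  \/
  (ny = -1 /\ forall x, inbox xi eta x -> forall y1 y2, Iset c d y1 -> Iset c d y2 ->
      y1 <= y2 -> sgnf f x y2 <= sgnf f x y1).

Definition midx (N : 'I_n -> nat) := {dffun forall k : 'I_n, 'I_(N k)}.

Definition poly_deg_lt (xi eta : 'I_n -> R) (N : 'I_n -> nat) (g : 'rV[R]_n -> R) : Prop :=
  exists q : midx N -> R, forall x, inbox xi eta x ->
    g x = \sum_(b : midx N) q b * \prod_(k < n) (x ord0 k) ^+ (b k).

Definition Delta (xi eta : 'I_n -> R) (N : 'I_n -> nat) (k : 'I_n) : R :=
  (eta k - xi k) / (N k)%:R.

(* the matrix V_{N_k} (0-indexed: row i <-> alpha_k = i+1, column j <-> exponent j+1) *)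
Definition Vmx (xi eta : 'I_n -> R) (N : 'I_n -> nat) (a : 'rV[R]_n) (k : 'I_n) : 'M[R]_(N k) :=
  \matrix_(i, j) ((xi k + (i.+1)%:R * Delta xi eta N k - a ord0 k) ^+ j.+1
                 - (xi k + (i : nat)%:R * Delta xi eta N k - a ord0 k) ^+ j.+1).

(* entry of a square matrix at natural-number indices (0 outside the range) *)
Definition mxe (m : nat) (A : 'M[R]_m) (i j : nat) : R :=
  match (insub i : option 'I_m), (insub j : option 'I_m) with
  | Some i', Some j' => A i' j'
  | _, _ => 0
  end.

Definition setc (x : 'rV[R]_n) (k : 'I_n) (t : R) : 'rV[R]_n :=
  \row_j (if j == k then t else x ord0 j).

Definition boxint (lo hi : 'I_n -> R) (h : 'rV[R]_n -> R) : R :=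
  (foldr (fun k (G : 'rV[R]_n -> R) => fun x =>
            \int[lebesgue_measure]_(t in `[lo k, hi k]) G (setc x k t))
         h (enum 'I_n)) 0.

(* the grid block R_alpha (alpha 0-indexed: alpha_paper = alpha + 1) *)
Definition blo (xi eta : 'I_n -> R) (N : 'I_n -> nat) (al : midx N) (k : 'I_n) : R :=
  xi k + ((al k : nat))%:R * Delta xi eta N k.
Definition bhi (xi eta : 'I_n -> R) (N : 'I_n -> nat) (al : midx N) (k : 'I_n) : R :=
  xi k + ((al k).+1)%:R * Delta xi eta N k.

Definition dcoef (f : 'rV[R]_n -> R -> R) (xi eta : 'I_n -> R) (c d ny : R)
    (N : 'I_n -> nat) (al : midx N) : R :=
  let vol := \prod_(k < n) Delta xi eta N k in
  (1 + ny) / 2 * vol * d + (1 - ny) / 2 * vol * c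
  - ny * boxint (blo xi eta al) (bhi xi eta al)
           (fun x => \int[lebesgue_measure]_(y in `[c, d]) Thetaf f x y).

(* c_beta for a multi-index beta : 'I_n -> nat, extended by 0 outside 0 <= beta <= N-1 *)
Definition ccoef (f : 'rV[R]_n -> R -> R) (xi eta : 'I_n -> R) (c d ny : R)
    (a : 'rV[R]_n) (N : 'I_n -> nat) (b : 'I_n -> nat) : R :=
  if [forall k, (b k < N k)%N] then
    (\prod_(k < n) ((b k).+1)%:R) *
    \sum_(al : midx N) (\prod_(k < n) mxe (invmx (Vmx xi eta N a k)) (b k) (al k))
                       * dcoef f xi eta c d ny al
  else 0.

End Defs.

(* Main.v *)
Require Import Defs.
From HB Require Import structures.
From mathcomp Require Import all_boot all_order all_algebra.
From mathcomp Require Import all_classical all_reals all_analysis.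
Import Order.TTheory GRing.Theory Num.Theory.
Import numFieldNormedType.Exports.
Local Open Scope classical_set_scope.
Local Open Scope ring_scope.

From mathcomp Require Import ring lra.
Set Implicit Arguments. Unset Strict Implicit. Unset Printing Implicit Defensive.
Section S.
Variable R : realType.
Notation mu := (@lebesgue_measure R).

Lemma Rint_deriv (Q : {poly R}) (l h : R) : l < h ->
  \int[mu]_(t in `[l, h]) (Q^`()).[t] = Q.[h] - Q.[l].
Proof.
move=> lh; rewrite /Rintegral.
rewrite (@continuous_FTC2 _ (horner Q^`()) (horner Q)) //.
- by apply: continuous_subspaceT; exact: continuous_horner.
- split.
  + by move=> x _; exact: derivable_horner.
  + apply: cvg_at_right_filter; exact: continuous_horner.
  + apply: cvg_at_left_filter; exact: continuous_horner.
- by move=> x _; rewrite -derivE.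
Qed.

Lemma Rint_sum (I : Type) (r : seq I) (P : I -> {poly R}) (l h : R) :
  \int[mu]_(t in `[l, h]) (\sum_(i <- r) (P i).[t]) = \sum_(i <- r) \int[mu]_(t in `[l, h]) (P i).[t].
Proof.
have cI (Q : {poly R}) : mu.-integrable `[l, h] (EFin \o horner Q).
  apply: continuous_compact_integrable; first exact: segment_compact.
  apply: continuous_subspaceT; exact: continuous_horner.
elim: r => [|i r IH].
  rewrite big_nil; under eq_Rintegral do rewrite big_nil.
  by rewrite Rintegral_cst // mul0r.
rewrite big_cons -IH; under eq_Rintegral do rewrite big_cons.
rewrite RintegralD //.
have -> : (fun x => \sum_(j <- r) (P j).[x]) = horner (\sum_(j <- r) P j).
  by apply/funext => x; rewrite horner_sum.
exact: cI.
Qed.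

Definition Jv (l h a : R) (m : nat) : R :=
  ((h - a) ^+ m.+1 - (l - a) ^+ m.+1) / (m.+1)%:R.

Lemma Rint_pow (C l h a : R) (m : nat) : l < h ->
  \int[mu]_(t in `[l, h]) (C * (t - a) ^+ m) = C * Jv l h a m.
Proof.
move=> lh.
pose Q : {poly R} := (C / (m.+1)%:R) *: ('X - a%:P) ^+ m.+1.
have HQ : Q^`() = C *: ('X - a%:P) ^+ m.
  rewrite /Q derivZ deriv_exp derivXsubC mul1r /= -scalerMnr scalerMnl.
  by congr (_ *: _); rewrite -mulr_natr -mulrA mulVf ?mulr1 // pnatr_eq0.
transitivity (\int[mu]_(t in `[l, h]) (Q^`()).[t]).
  by apply: eq_Rintegral => t _; rewrite HQ hornerZ horner_exp ?hornerE.
rewrite Rint_deriv // /Q !hornerZ !hornerE /Jv.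
by rewrite -mulrBr mulrAC.
Qed.

Variable n : nat.

Definition stepf (lo hi : 'I_n -> R) k (G : 'rV[R]_n -> R) : 'rV[R]_n -> R :=
  fun x => \int[mu]_(t in `[lo k, hi k]) G (setc x k t).

Lemma boxintE lo hi h : boxint lo hi h = foldr (stepf lo hi) h (enum 'I_n) 0.
Proof. by []. Qed.

Lemma foldr_prod (I : finType) (w : I -> R) (e : I -> 'I_n -> nat) (a : 'rV[R]_n)
   (lo hi : 'I_n -> R) : (forall k, lo k < hi k) ->
  forall s, uniq s -> forall x,
  foldr (stepf lo hi) (fun y => \sum_i w i * \prod_k (y ord0 k - a ord0 k) ^+ (e i k)) s x
  = \sum_i w i * \prod_k (if k \in s then Jv (lo k) (hi k) (a ord0 k) (e i k)
                          else (x ord0 k - a ord0 k) ^+ (e i k)).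
Proof.
move=> lohi; elim => [|k s IH] /=.
  by move=> _ x; apply: eq_bigr => i _; congr (_ * _); apply: eq_bigr => j _; rewrite in_nil.
move=> /andP[ks us] x; rewrite /stepf.
pose C i := w i * \prod_(j | j != k) (if j \in s then Jv (lo j) (hi j) (a ord0 j) (e i j)
                          else (x ord0 j - a ord0 j) ^+ (e i j)).
transitivity (\int[mu]_(t in `[lo k, hi k]) \sum_(i <- index_enum I)
    ((C i) *: ('X - (a ord0 k)%:P) ^+ (e i k)).[t]).
  apply: eq_Rintegral => t _; rewrite IH //; apply: eq_bigr => i _.
  rewrite hornerZ horner_exp ?hornerE /C (bigD1 k) //= (negbTE ks) mxE eqxx.
  rewrite [RHS]mulrAC -[RHS]mulrA; congr (_ * (_ * _)).
  apply: eq_bigr => j jk; rewrite mxE (negbTE jk) //.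
rewrite Rint_sum; apply: eq_bigr => i _.
under eq_Rintegral do rewrite hornerZ horner_exp ?hornerE.
rewrite Rint_pow // /C -mulrA; congr (_ * _).
rewrite [in RHS](bigD1 k) //= inE eqxx /= mulrC; congr (_ * _).
apply: eq_bigr => j jk; rewrite inE (negbTE jk) //.
Qed.
End S.
Section S.
Variable R : realType.
Notation mu := (@lebesgue_measure R).
Variable n : nat.

Lemma foldr_eq (lo hi : 'I_n -> R) (h1 h2 : 'rV[R]_n -> R) (s : seq 'I_n) : forall x : 'rV[R]_n,
  (forall y : 'rV[R]_n, (forall j, j \in s -> lo j <= y ord0 j <= hi j) ->
     (forall j, j \notin s -> y ord0 j = x ord0 j) -> h1 y = h2 y) ->
  foldr (stepf lo hi) h1 s x = foldr (stepf lo hi) h2 s x.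
Proof.
elim: s => [|k s IH] x H /=.
  by apply: H => // j; rewrite in_nil.
rewrite /stepf; apply: eq_Rintegral => t; rewrite inE /= in_itv /= => tI.
apply: IH => y H1 H2; apply: H => j.
  rewrite inE => /orP[/eqP->|js]; last exact: H1.
  case: (boolP (k \in s)) => ks; first exact: H1.
  by rewrite H2 // mxE eqxx.
rewrite inE negb_or => /andP[jk js]; rewrite H2 // mxE (negbTE jk) //.
Qed.

Lemma fcont (f : 'rV[R]_n -> R -> R) x :
  continuous (fun p : 'rV[R]_n * R => f p.1 p.2) -> continuous (f x).
Proof.
move=> hf y; apply: (@continuous2_cvg _ _ _ _ (nbhs y) _ (fun _ => x) id f x y).
- exact: (hf (x, y)).
- exact: cvg_cst.
- exact: cvg_id.
Qed.

Lemma nocont_all (f : 'rV[R]_n -> R -> R) xi eta c d x :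
  assumption1 f xi eta c d -> inbox xi eta x ->
  (forall y, Iset c d y -> 0 <= f x y) -> False.
Proof.
move=> A1 xb H; have [y0 [Iy0 nc _]] := A1 x xb; apply: nc.
rewrite /cont_within_at /sgnf; rewrite ifT; last exact: H.
apply: cvg_near_cst; rewrite near_withinE; near=> y => Iy; by rewrite ifT //; apply: H.
Unshelve. all: by end_near.
Qed.
End S.
Section S2.
Variable R : realType.
Variable n : nat.
Variables (f : 'rV[R]_n -> R -> R) (xi eta : 'I_n -> R) (c d : R) (g : 'rV[R]_n -> R).
Hypothesis hf : continuous (fun p : 'rV[R]_n * R => f p.1 p.2).
Hypothesis A1 : assumption1 f xi eta c d.
Hypothesis Hg : forall x, inbox xi eta x -> Iset c d (g x) /\ f x (g x) = 0.
Hypothesis Hu : forall x y, inbox xi eta x -> Iset c d y -> f x y = 0 -> y = g x.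

Lemma sign_inc x : inbox xi eta x ->
  (forall y1 y2, Iset c d y1 -> Iset c d y2 -> y1 <= y2 -> sgnf f x y1 <= sgnf f x y2) ->
  forall y, Iset c d y -> (0 <= f x y) = (g x <= y).
Proof.
move=> xb mono y Iy; have [Igx fg0] := Hg xb.
have sg1 : sgnf f x (g x) = 1 by rewrite /sgnf fg0 lexx.
apply/idP/idP => [fy|gy]; last first.
  have := mono _ _ Igx Iy gy; rewrite sg1 /sgnf.
  by case: ifP => // _; move=> hh; exfalso; lra.
rewrite leNgt; apply/negP => ylt.
case: (pselect (exists y', Iset c d y' /\ f x y' < 0)) => [[y' [Iy' fy']] | nall].
  case: (leP y y') => yy'.
    have := mono _ _ Iy Iy' yy'; rewrite /sgnf fy (ltNge _ 0) in fy' *.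
    by rewrite (negbTE fy') => hh; lra.
  have cf := @fcont _ _ f x hf.
  have [z zI fz] : exists2 z, z \in `[y', y] & f x z = 0.
    apply: IVT (ltW yy') (continuous_subspaceT cf) _.
    by rewrite ge_min le_max (ltW fy') fy orbT.
  move: zI; rewrite in_itv /= => /andP[y'z zy].
  have Iz : Iset c d z.
    move: Iy Iy'; rewrite /Iset /= => /andP[_ yd] /andP[cy' _].
    by rewrite (le_trans cy' y'z) (le_trans zy yd).
  have := Hu xb Iz fz => zg.
  by move: ylt; rewrite -zg ltNge zy.
apply: (nocont_all A1 xb) => y' Iy'; rewrite leNgt; apply/negP => h; apply: nall; exists y'.
by [].
Qed.

Lemma sign_dec x : inbox xi eta x ->
  (forall y1 y2, Iset c d y1 -> Iset c d y2 -> y1 <= y2 -> sgnf f x y2 <= sgnf f x y1) ->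
  forall y, Iset c d y -> (0 <= f x y) = (y <= g x).
Proof.
move=> xb mono y Iy; have [Igx fg0] := Hg xb.
have sg1 : sgnf f x (g x) = 1 by rewrite /sgnf fg0 lexx.
apply/idP/idP => [fy|gy]; last first.
  have := mono _ _ Iy Igx gy; rewrite sg1 /sgnf.
  by case: ifP => // _; move=> hh; exfalso; lra.
rewrite leNgt; apply/negP => ylt.
case: (pselect (exists y', Iset c d y' /\ f x y' < 0)) => [[y' [Iy' fy']] | nall].
  case: (leP y' y) => yy'.
    have := mono _ _ Iy' Iy yy'; rewrite /sgnf fy (ltNge _ 0) in fy' *.
    by rewrite (negbTE fy') => hh; lra.
  have cf := @fcont _ _ f x hf.
  have [z zI fz] : exists2 z, z \in `[y, y'] & f x z = 0.
    apply: IVT (ltW yy') (continuous_subspaceT cf) _.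
    by rewrite ge_min (ltW fy') orbT /= le_max fy.
  move: zI; rewrite in_itv /= => /andP[yz zy'].
  have Iz : Iset c d z.
    move: Iy Iy'; rewrite /Iset /= => /andP[cy _] /andP[_ y'd].
    by rewrite (le_trans cy yz) (le_trans zy' y'd).
  have := Hu xb Iz fz => zg.
  by move: ylt; rewrite -zg ltNge yz.
apply: (nocont_all A1 xb) => y' Iy'; rewrite leNgt; apply/negP => h; apply: nall; exists y'.
by [].
Qed.
End S2.
Section S3.
Variable R : realType.
Notation mu := (@lebesgue_measure R).
Variable n : nat.
Variables (f : 'rV[R]_n -> R -> R) (xi eta : 'I_n -> R) (c d ny : R) (g : 'rV[R]_n -> R).
Hypothesis hf : continuous (fun p : 'rV[R]_n * R => f p.1 p.2).
Hypothesis A1 : assumption1 f xi eta c d.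
Hypothesis Hny : ny_spec f xi eta c d ny.
Hypothesis Hg : forall x, inbox xi eta x -> Iset c d (g x) /\ f x (g x) = 0.
Hypothesis Hu : forall x y, inbox xi eta x -> Iset c d y -> f x y = 0 -> y = g x.

Lemma Rint_indic (u v : R) : u <= v ->
  \int[mu]_(y in `[u, v]) (\1_(`[u, v] : set R) y : R) = v - u.
Proof.
move=> uv; rewrite /Rintegral integral_indic //= setIid lebesgue_measure_itv /=.
case: ltP => //= vu; apply/eqP; rewrite eq_sym subr_eq0 eq_le uv. Abort.

Lemma theta_int x : inbox xi eta x ->
  \int[mu]_(y in `[c, d]) Thetaf f x y = (1 + ny) / 2 * d - (1 - ny) / 2 * c - ny * g x.
Proof.
move=> xb; have [Igx _] := Hg xb; move: (Igx); rewrite /Iset /= => /andP[cg gd].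
case: Hny => [[-> mono]|[-> mono]].
- transitivity (\int[mu]_(y in `[c, d]) (\1_(`[g x, d] : set R) y : R)).
    apply: eq_Rintegral => y /set_mem /=; rewrite in_itv /= => Iy.
    rewrite /Thetaf indicE (@sign_inc R n f xi eta c d g hf A1 Hg Hu x xb (mono x xb) y Iy).
    by rewrite mem_setE in_itv /= (andP Iy).2 andbT; case: ifP.
  rewrite /Rintegral integral_indic //= setIidl; last first.
    by move=> y /=; rewrite !in_itv /= => /andP[gy ->]; rewrite (le_trans cg gy).
  rewrite lebesgue_measure_itv /=; case: ltP => [gd' | dg] /=.
    lra.
  rewrite lee_fin in dg; have -> : g x = d by apply: le_anti; rewrite gd dg.
  transitivity (0:R); first by []. lra.
- transitivity (\int[mu]_(y in `[c, d]) (\1_(`[c, g x] : set R) y : R)).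
    apply: eq_Rintegral => y /set_mem /=; rewrite in_itv /= => Iy.
    rewrite /Thetaf indicE (@sign_dec R n f xi eta c d g hf A1 Hg Hu x xb (mono x xb) y Iy).
    by rewrite mem_setE in_itv /= (andP Iy).1 /=; case: ifP.
  rewrite /Rintegral integral_indic //= setIidl; last first.
    by move=> y /=; rewrite !in_itv /= => /andP[-> yg]; rewrite (le_trans yg gd).
  rewrite lebesgue_measure_itv /=; case: ltP => [gd' | dg] /=.
    lra.
  rewrite lee_fin in dg; have -> : g x = c by apply: le_anti; rewrite cg dg.
  transitivity (0:R); first by []. lra.
Qed.
End S3.
Section Alg.
Variable R : realType.
Variables (n B : nat).
Local Notation Ix := {ffun 'I_n -> 'I_B.+1}.
Definition inG (G : 'I_n -> nat) (f : Ix) : bool := [forall k, (f k < G k)%N].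

Lemma distr_Ix (G : 'I_n -> nat) (F : 'I_n -> nat -> R) :
  \sum_(f : Ix | inG G f) \prod_k F k (f k) = \prod_k \sum_(j < B.+1 | (j < G k)%N) F k j.
Proof.
symmetry; rewrite bigA_distr_big_dep; symmetry.
apply: eq_bigl => f; apply/forallP/familyP => H k; move: (H k) => //.
Qed.

Definition tomidx (G : 'I_n -> nat) (Gp : forall k, (0 < G k)%N) (f : Ix) : midx G :=
  @finfun _ (fun k => 'I_(G k)) (fun k => insubd (Ordinal (Gp k)) (f k : nat)).
Definition frommidx (G : 'I_n -> nat) (HB : forall k, (G k <= B.+1)%N) (al : midx G) : Ix :=
  [ffun k => widen_ord (HB k) (al k)].

Lemma tomidxE G Gp (f : Ix) k : (f k < G k)%N -> ((@tomidx G Gp f k) : nat) = f k.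
Proof. by move=> fk; rewrite /tomidx ffunE val_insubd fk. Qed.

Lemma sum_midx (G : 'I_n -> nat) (Gp : forall k, (0 < G k)%N) (HB : forall k, (G k <= B.+1)%N)
  (F : midx G -> R) :
  \sum_(al : midx G) F al = \sum_(f : Ix | inG G f) F (tomidx Gp f).
Proof.
rewrite (reindex (frommidx HB)) /=; last first.
  exists (tomidx Gp) => [al _|f].
    apply/ffunP => k; apply: val_inj => /=; rewrite tomidxE ffunE //=.
  rewrite inE => fG; apply/ffunP => k; apply: val_inj => /=; rewrite ffunE /= tomidxE //; exact: (forallP fG).
apply: eq_big => [al|al _].
  by apply/esym/forallP => k; rewrite ffunE /=.
congr F; apply/ffunP => k; apply: val_inj => /=; rewrite tomidxE ffunE //=.
Qed.
End Alg.
Section Vu.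
Variable R : realType.

Lemma vdiff_unit (m : nat) (u : nat -> R) :
  (forall i j, (i <= m)%N -> (j <= m)%N -> u i = u j -> i = j) ->
  (\matrix_(i < m, j < m) (u i.+1 ^+ j.+1 - u i ^+ j.+1)) \in unitmx.
Proof.
move=> uinj; set A := \matrix_(i < m, j < m) _.
rewrite -unitmx_tr -row_free_unit -kermx_eq0.
suff H : forall v : 'rV_m, v *m A^T = 0 -> v = 0.
  apply/eqP/row_matrixP => i; rewrite row0; apply: H; apply/sub_kermxP; exact: row_sub.
move=> v vA.
pose w (j : nat) := if (insub j : option 'I_m) is Some j' then v 0 j' else 0.
pose Q : {poly R} := \poly_(i < m.+1) (if i is j.+1 then w j else 0).
have QE t : Q.[t] = \sum_(j < m) v 0 j * t ^+ j.+1.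
  rewrite horner_poly big_ord_recl /= mul0r add0r; apply: eq_bigr => j _ /=.
  by rewrite /w valK.
have Qstep i : (i < m)%N -> Q.[u i.+1] = Q.[u i].
  move=> im; have := congr1 (fun M : 'rV_m => M 0 (Ordinal im)) vA; rewrite !mxE.
  move=> H0; apply/eqP; rewrite -subr_eq0 !QE -sumrB; apply/eqP; rewrite -[RHS]H0.
  by apply: eq_bigr => j _; rewrite !mxE mulrBr.
have Qc i : (i <= m)%N -> Q.[u i] = Q.[u 0].
  elim: i => [//|i IH] im; rewrite Qstep //; apply: IH; exact: ltnW.
have Q0 : Q - (Q.[u 0])%:P = 0.
  apply: (@roots_geq_poly_eq0 _ _ [seq u i | i <- iota 0 m.+1]).
  - apply/allP => t /mapP[i]; rewrite mem_iota => /andP[_ im] ->.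
    by rewrite /root hornerD hornerN hornerC Qc // subrr.
  - rewrite map_inj_in_uniq ?iota_uniq // => i j; rewrite !mem_iota => /andP[_ im] /andP[_ jm].
    by apply: uinj.
  - rewrite size_map size_iota; apply: leq_trans (size_polyD _ _) _.
    rewrite geq_max size_poly size_polyN; exact: leq_trans (size_polyC_leq1 _) _.
apply/rowP => j; rewrite mxE.
have := congr1 (fun p : {poly R} => p`_(j.+1)) Q0.
by rewrite coefB coefC coef_poly /= /w valK ltnS ltn_ord subr0 coef0.
Qed.
End Vu.
Section Rep.
Variable R : realType.
Variables (n B : nat).
Local Notation Ix := {ffun 'I_n -> 'I_B.+1}.

Lemma pow_expand (x a : R) (m M : nat) : (m < M)%N -> (M <= B.+1)%N ->
  x ^+ m = \sum_(j < B.+1 | (j < M)%N) ('C(m, j)%:R * a ^+ (m - j)) * (x - a) ^+ j.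
Proof.
move=> mM MB.
rewrite [X in X ^+ m](_ : x = a + (x - a)); last by rewrite addrC subrK.
rewrite exprDn (big_ord_widen B.+1 (fun i => (a ^+ (m - i) * (x - a) ^+ i) *+ 'C(m, i))); last first.
  exact: leq_trans mM MB.
rewrite [LHS]big_mkcond [RHS]big_mkcond; apply: eq_bigr => i _.
case: (ltnP i m.+1) => im.
  by rewrite (leq_trans im mM) -mulr_natl mulrA.
by rewrite bin_small //; case: ifP => _; rewrite ?mul0r.
Qed.

Lemma rep_exists (G : 'I_n -> nat) (HB : forall k, (G k <= B.+1)%N) (q : midx G -> R)
  (a : 'rV[R]_n) :
  exists P : Ix -> R, forall x : 'rV[R]_n,
    \sum_(b : midx G) q b * \prod_k x ord0 k ^+ b k
    = \sum_(f : Ix | inG G f) P f * \prod_k (x ord0 k - a ord0 k) ^+ f k.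
Proof.
exists (fun f : Ix => \sum_b q b * \prod_k ('C(b k, f k)%:R * a ord0 k ^+ (b k - f k))).
move=> x.
transitivity (\sum_(b : midx G) q b * \sum_(f : Ix | inG G f)
   \prod_k (('C(b k, f k)%:R * a ord0 k ^+ (b k - f k)) * (x ord0 k - a ord0 k) ^+ f k)).
  apply: eq_bigr => b _; congr (_ * _).
  rewrite (@distr_Ix R n B G (fun k (j : nat) => ('C(b k, j)%:R * a ord0 k ^+ (b k - j)) * (x ord0 k - a ord0 k) ^+ j)).
  apply: eq_bigr => k _.
  exact: pow_expand.
under eq_bigr do rewrite mulr_sumr.
rewrite exchange_big /=; apply: eq_bigr => f _; rewrite mulr_suml; apply: eq_bigr => b _.
by rewrite big_split /= mulrA.
Qed.
End Rep.

Section Main.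
Variable R : realType.
Notation mu := (@lebesgue_measure R).
Variables (n B : nat).
Local Notation Ix := {ffun 'I_n -> 'I_B.+1}.
Variables (f : 'rV[R]_n -> R -> R) (xi eta : 'I_n -> R) (c d ny : R) (g : 'rV[R]_n -> R)
  (a : 'rV[R]_n) (G : 'I_n -> nat).
Hypothesis hf : continuous (fun p : 'rV[R]_n * R => f p.1 p.2).
Hypothesis hxe : forall k, xi k < eta k.
Hypothesis A1 : assumption1 f xi eta c d.
Hypothesis Hny : ny_spec f xi eta c d ny.
Hypothesis Hg : forall x, inbox xi eta x -> Iset c d (g x) /\ f x (g x) = 0.
Hypothesis Hu : forall x y, inbox xi eta x -> Iset c d y -> f x y = 0 -> y = g x.
Hypothesis Gp : forall k, (0 < G k)%N.
Hypothesis HB : forall k, (G k <= B.+1)%N.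
Variable P : Ix -> R.
Hypothesis HP : forall x, inbox xi eta x ->
  g x = \sum_(b : Ix | inG G b) P b * \prod_k (x ord0 k - a ord0 k) ^+ b k.

Lemma Delta_gt0 k : 0 < Delta xi eta G k.
Proof. by rewrite /Delta divr_gt0 ?subr_gt0 ?hxe // ltr0n Gp. Qed.

Lemma block_in_box (al : midx G) (y : 'rV[R]_n) :
  (forall j, blo xi eta al j <= y ord0 j <= bhi xi eta al j) -> inbox xi eta y.
Proof.
move=> H k; have /andP[h1 h2] := H k; have D0 := Delta_gt0 k; apply/andP; split.
  by apply: le_trans h1; rewrite /blo lerDl mulr_ge0 // ltW.
apply: le_trans h2 _; rewrite /bhi /Delta -lerBrDl mulrC -mulrA.
rewrite -[leRHS]mulr1 ler_pM2l ?subr_gt0 ?hxe // mulrC ler_pdivrMr ?ltr0n ?Gp // mul1r ler_nat.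
exact: ltn_ord.
Qed.

Lemma ny_cases : ny = 1 \/ ny = -1.
Proof. by case: Hny => [[-> _]|[-> _]]; [left|right]. Qed.

Lemma dcoef_val (al : midx G) :
  dcoef f xi eta c d ny al = \sum_(b : Ix | inG G b) P b *
     \prod_k Jv (blo xi eta al k) (bhi xi eta al k) (a ord0 k) (b k).
Proof.
set K := (1 + ny) / 2 * d - (1 - ny) / 2 * c.
pose b0 : Ix := [ffun => ord0].
have b0G : inG G b0 by apply/forallP => k; rewrite ffunE Gp.
pose w (b : Ix) := - ny * (if inG G b then P b else 0) + (if b == b0 then K else 0).
have lohi k : blo xi eta al k < bhi xi eta al k.
  by rewrite /blo /bhi ltrD2l ltr_pM2r ?Delta_gt0 // ltr_nat.
have M0 (y : 'rV[R]_n) : \prod_k (y ord0 k - a ord0 k) ^+ b0 k = 1.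
  by apply: big1 => k _; rewrite ffunE expr0.
have SW (F : Ix -> R) : \sum_(b : Ix) w b * F b =
    - ny * (\sum_(b : Ix | inG G b) P b * F b) + K * F b0.
  rewrite (eq_bigr (fun b => - ny * ((if inG G b then P b else 0) * F b) +
            (if b == b0 then K else 0) * F b)); last first.
    by move=> b _; rewrite mulrDl mulrA.
  rewrite big_split /= -mulr_sumr; congr (_ * _ + _).
    by rewrite [RHS]big_mkcond; apply: eq_bigr => b _; case: ifP; rewrite ?mul0r.
  rewrite (bigD1 b0) //= eqxx big1 ?addr0 // => b /negbTE ->; exact: mul0r.
have E : boxint (blo xi eta al) (bhi xi eta al)
      (fun x => \int[mu]_(y in `[c, d]) Thetaf f x y)
    = boxint (blo xi eta al) (bhi xi eta al)
      (fun y => \sum_(b : Ix) w b * \prod_k (y ord0 k - a ord0 k) ^+ b k).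
  rewrite !boxintE; apply: foldr_eq => y Hy _.
  have yb : inbox xi eta y.
    by apply: (block_in_box (al := al)) => j; apply: Hy; rewrite mem_enum.
  rewrite (theta_int hf A1 Hny Hg Hu yb) SW M0 mulr1 -HP //.
  rewrite /K; have [->|->] := ny_cases; ring.
rewrite /dcoef /= E boxintE foldr_prod ?enum_uniq //.
rewrite (eq_bigr (fun i : Ix => w i * \prod_k Jv (blo xi eta al k) (bhi xi eta al k) (a ord0 k) (i k))); last first.
  by move=> i _; congr (_ * _); apply: eq_bigr => k _; rewrite mem_enum.
rewrite SW.
have J0 : \prod_k Jv (blo xi eta al k) (bhi xi eta al k) (a ord0 k) (b0 k)
    = \prod_k Delta xi eta G k.
  apply: eq_bigr => k _; rewrite ffunE /Jv /= !expr1 divr1 /blo /bhi.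
  rewrite -addn1 natrD; ring.
rewrite J0 /K; have [->|->] := ny_cases; ring.
Qed.

Lemma mxe_ord m (A : 'M[R]_m) i j (hi : (i < m)%N) (hj : (j < m)%N) :
  mxe A i j = A (Ordinal hi) (Ordinal hj).
Proof.
rewrite /mxe; case: insubP => [i' _ ei|]; last by rewrite hi.
case: insubP => [j' _ ej|]; last by rewrite hj.
by congr (A _ _); apply: val_inj.
Qed.

Lemma JvV k i j (hi : (i < G k)%N) (hj : (j < G k)%N) :
  Jv (xi k + i%:R * Delta xi eta G k) (xi k + i.+1%:R * Delta xi eta G k) (a ord0 k) j
  = mxe (Vmx xi eta G a k) i j / (j.+1)%:R.
Proof. by rewrite (mxe_ord _ hi hj) mxE. Qed.

Lemma Vunit k : Vmx xi eta G a k \in unitmx.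
Proof.
apply: (@vdiff_unit _ _ (fun i : nat => xi k + i%:R * Delta xi eta G k - a ord0 k)).
move=> i j _ _ /addIr/addrI/mulIf H; apply/eqP; rewrite -(eqr_nat R); apply/eqP.
by apply: H; rewrite gt_eqF // Delta_gt0.
Qed.

Lemma VinvV k (i j : nat) (hi : (i < G k)%N) (hj : (j < G k)%N) :
  \sum_(l < G k) mxe (invmx (Vmx xi eta G a k)) i l * mxe (Vmx xi eta G a k) l j
  = (i == j)%:R.
Proof.
have := congr1 (fun M : 'M[R]_(G k, G k) => M (Ordinal hi) (Ordinal hj)) (mulVmx (Vunit k)).
rewrite !mxE /= => <-; apply: eq_bigr => l _.
by rewrite (mxe_ord _ hi (ltn_ord l)) (mxe_ord _ (ltn_ord l) hj); congr (_ * _); congr (_ _ _);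
  apply: val_inj.
Qed.

Lemma ccoef_val (be : Ix) : inG G be -> ccoef f xi eta c d ny a G (fun k => be k) = P be.
Proof.
move=> beG; have beGk k : (be k < G k)%N by exact: (forallP beG k).
rewrite /ccoef ifT; last by apply/forallP => k; exact: beGk.
rewrite (eq_bigr (fun al : midx G => \prod_k mxe (invmx (Vmx xi eta G a k)) (be k) (al k) * \sum_(b : Ix | inG G b) P b * \prod_k Jv (blo xi eta al k) (bhi xi eta al k) (a ord0 k) (b k))); last by move=> al _; rewrite dcoef_val.
rewrite (sum_midx Gp HB).
pose Vi k := invmx (Vmx xi eta G a k).
pose V k := Vmx xi eta G a k.
transitivity (\prod_k ((be k).+1)%:R * \sum_(b : Ix | inG G b) P b *
   \prod_k \sum_(l < G k) (mxe (Vi k) (be k) l * (mxe (V k) l (b k) / ((b k).+1)%:R))).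
  congr (_ * _).
  transitivity (\sum_(al : Ix | inG G al) \sum_(b : Ix | inG G b) P b *
    \prod_k (mxe (Vi k) (be k) (al k) * (mxe (V k) (al k) (b k) / ((b k).+1)%:R))).
    apply: eq_bigr => al alG; rewrite mulr_sumr; apply: eq_bigr => b bG.
    rewrite mulrCA; congr (_ * _); rewrite -big_split /=; apply: eq_bigr => k _.
    rewrite /blo /bhi tomidxE ?(forallP alG k) // JvV ?(forallP alG k) ?(forallP bG k) //.
  rewrite exchange_big /=; apply: eq_bigr => b bG; rewrite -mulr_sumr; congr (_ * _).
  rewrite (@distr_Ix R n B G (fun k (j : nat) =>
     mxe (Vi k) (be k) j * (mxe (V k) j (b k) / ((b k).+1)%:R))).
  apply: eq_bigr => k _.
  by rewrite (big_ord_widen _ (fun j : nat =>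
     mxe (Vi k) (be k) j * (mxe (V k) j (b k) / ((b k).+1)%:R)) (HB k)).
rewrite (eq_bigr (fun b : Ix => P b * \prod_k (((be k : nat) == b k)%:R / ((b k).+1)%:R)));
  last first.
  move=> b bG; congr (_ * _); apply: eq_bigr => k _.
  under eq_bigr do rewrite mulrA.
  by rewrite -mulr_suml VinvV // (forallP bG k).
rewrite (bigD1 be) //= [X in _ * (_ + X)]big1 ?addr0; last first.
  move=> b /andP[bG nbe].
  have [k hk] : exists k, (be k : nat) != b k.
    apply/existsP; apply: contraNT nbe; rewrite negb_exists => /forallP H.
    apply/eqP/ffunP => k; apply: val_inj; apply/eqP; rewrite eq_sym; move: (H k).
    by rewrite negbK.
  by rewrite (bigD1 k) //= (negbTE hk) !mul0r mulr0.
under [X in _ * (_ * X)]eq_bigr do rewrite eqxx mul1r.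
rewrite mulrCA -big_split /= big1 ?mulr1 // => k _.
by rewrite mulfV // pnatr_eq0.
Qed.

Lemma ccoef_gen (be : Ix) :
  ccoef f xi eta c d ny a G (fun k => be k) = if inG G be then P be else 0.
Proof.
case: ifP => H; first exact: ccoef_val.
by rewrite /ccoef (_ : [forall k, _] = inG G be) // H.
Qed.

End Main.

Lemma le_sum_nat (n : nat) (F : 'I_n -> nat) k : (F k <= \sum_j F j)%N.
Proof. by rewrite (bigD1 k) //= leq_addr. Qed.

Theorem theorem3p2 (R : realType) (n : nat) (f : 'rV[R]_n -> R -> R)
    (xi eta : 'I_n -> R) (c d ny : R) (g : 'rV[R]_n -> R) (a : 'rV[R]_n)
    (N : 'I_n -> nat) :
  continuous (fun p : 'rV[R]_n * R => f p.1 p.2) ->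
  (forall k, xi k < eta k) ->
  c <= d ->
  assumption1 f xi eta c d ->
  ny_spec f xi eta c d ny ->
  (forall x, inbox xi eta x -> Iset c d (g x) /\ f x (g x) = 0) ->
  (forall x y, inbox xi eta x -> Iset c d y -> f x y = 0 -> y = g x) ->
  inbox xi eta a ->
  (forall k, (0 < N k)%N) ->
  poly_deg_lt xi eta N g ->
  (forall x, inbox xi eta x ->
     g x = \sum_(b : midx N) ccoef f xi eta c d ny a N (fun k => b k)
                             * \prod_(k < n) (x ord0 k - a ord0 k) ^+ (b k))
  /\
  (forall N' : 'I_n -> nat, (forall k, (0 < N' k)%N) -> poly_deg_lt xi eta N' g ->
     forall b : 'I_n -> nat,
       ccoef f xi eta c d ny a N' b = ccoef f xi eta c d ny a N b).
Proof.
move=> hf hxe hcd A1 Hny Hg Hu ha Np [q Hq].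
have getP (B : nat) (G : 'I_n -> nat) (HB : forall k, (G k <= B.+1)%N) (q' : midx G -> R) :
   (forall x, inbox xi eta x -> g x = \sum_(b : midx G) q' b * \prod_(k < n) (x ord0 k) ^+ (b k)) ->
   exists P : {ffun 'I_n -> 'I_B.+1} -> R, forall x, inbox xi eta x ->
     g x = \sum_(b | inG G b) P b * \prod_k (x ord0 k - a ord0 k) ^+ b k.
  move=> Hq'; have [P HP] := rep_exists HB q' a; exists P => x xb; rewrite Hq' //.
split.
  pose B := (\sum_k N k)%N.
  have HB k : (N k <= B.+1)%N by apply: leq_trans (le_sum_nat N k) _.
  have [P HP] := getP B N HB q Hq.
  move=> x xb; rewrite HP // (sum_midx Np HB); apply: eq_bigr => be beG.
  have -> : (fun k => (tomidx Np be k : nat)) = (fun k => be k).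
    by apply/funext => k; rewrite tomidxE // (forallP beG k).
  rewrite (ccoef_gen hf hxe A1 Hny Hg Hu Np HB HP be) beG; congr (_ * _).
  by apply: eq_bigr => k _; rewrite tomidxE // (forallP beG k).
move=> N' Np' [q' Hq'] b.
pose M k := (N k + N' k)%N.
pose B := (\sum_k M k)%N.
have HBM k : (M k <= B.+1)%N by apply: leq_trans (le_sum_nat M k) _.
have HBN k : (N k <= B.+1)%N by apply: leq_trans (HBM k); rewrite leq_addr.
have HBN' k : (N' k <= B.+1)%N by apply: leq_trans (HBM k); rewrite leq_addl.
have Mp k : (0 < M k)%N by rewrite addn_gt0 Np.
have [P HP] := getP B N HBN q Hq.
have [P' HP'] := getP B N' HBN' q' Hq'.
have inNM (be : {ffun 'I_n -> 'I_B.+1}) : inG N be -> inG M be.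
  by move=> /forallP H; apply/forallP => k; apply: leq_trans (H k) _; rewrite leq_addr.
have inN'M (be : {ffun 'I_n -> 'I_B.+1}) : inG N' be -> inG M be.
  by move=> /forallP H; apply/forallP => k; apply: leq_trans (H k) _; rewrite leq_addl.
have HPM (Q : {ffun 'I_n -> 'I_B.+1} -> R) (G : 'I_n -> nat) :
    (forall be : {ffun 'I_n -> 'I_B.+1}, inG G be -> inG M be) ->
    (forall x, inbox xi eta x -> g x = \sum_(be | inG G be) Q be * \prod_k (x ord0 k - a ord0 k) ^+ be k) ->
    forall x, inbox xi eta x -> g x = \sum_(be | inG M be)
       (if inG G be then Q be else 0) * \prod_k (x ord0 k - a ord0 k) ^+ be k.
  move=> GM HQ x xb; rewrite HQ // [LHS]big_mkcond [RHS]big_mkcond; apply: eq_bigr => be _.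
  case: (boolP (inG G be)) => H; first by rewrite (GM _ H).
  by case: ifP => _; rewrite ?mul0r.
have E1 be := ccoef_gen hf hxe A1 Hny Hg Hu Mp HBM (HPM P N inNM HP) be.
have E2 be := ccoef_gen hf hxe A1 Hny Hg Hu Mp HBM (HPM P' N' inN'M HP') be.
case: (boolP ([forall k, (b k < N k)%N] || [forall k, (b k < N' k)%N])) => Hb; last first.
  rewrite negb_or in Hb; case/andP: Hb => H1 H2.
  by rewrite /ccoef (negbTE H1) (negbTE H2).
have bB k : (b k < B.+1)%N.
  case/orP: Hb => /forallP H; apply: leq_trans (H k) _; [exact: HBN | exact: HBN'].
pose be : {ffun 'I_n -> 'I_B.+1} := [ffun k => Ordinal (bB k)].
have -> : b = (fun k => be k) by apply/funext => k; rewrite ffunE.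
rewrite (ccoef_gen hf hxe A1 Hny Hg Hu Np' HBN' HP' be).
rewrite (ccoef_gen hf hxe A1 Hny Hg Hu Np HBN HP be).
have beM : inG M be.
  case/orP: Hb => H; [apply: inNM | apply: inN'M]; apply/forallP => k; rewrite ffunE;
    exact: (forallP H k).
have := E1 be; rewrite E2 beM => <-.
by [].
Qed.
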